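(* Let $d\in\{1,2,3,4,7\}$ and let $Q_d$, $R_d$, $\beta_d$ be as in the context. For a positive integer $h$ define $$\mathscr{T}_{d,h}=c_d\prod_{p\in R_d}W_{d,p}(h)\prod_{\substack{p\in Q_d\\ p\mid h}}\frac{1-p^{-(m_p(h)+1)}}{1-p^{-1}},$$ with $c_1=2$, $c_2=2\sqrt2$, $c_3=\frac{2}{\sqrt3}$, $c_4=2$, $c_7=\frac{2\sqrt7}{3}$, and $W_{1,2}(h)=\frac14$ if $m_2(h)=0$, $=\frac{2^{m_2(h)+1}-3}{2^{m_2(h)+2}}$ if $m_2(h)\ge1$; $W_{2,2}(h)=\frac14$ if $m_2(h)\in\{0,1\}$, $=\frac{2^{m_2(h)}-3}{2^{m_2(h)+1}}$ if $m_2(h)\ge2$; $W_{3,3}(h)=\frac12\cdot\frac{3^{m_3(h)+1}-2}{3^{m_3(h)+1}}$; $W_{4,2}(h)=\frac18,\,0,\,\frac{5}{16}$ for $m_2(h)=0,1,2$ respectively, and $=\frac{3\cdot2^{m_2(h)-1}-3}{2^{m_2(h)+2}}$ if $m_2(h)\ge3$; $W_{7,2}(h)=\frac12$ if $m_2(h)\in\{0,1\}$, $=\frac34$ if $m_2(h)\ge2$; $W_{7,7}(h)=\frac12\cdot\frac{7^{m_7(h)+1}-4}{7^{m_7(h)+1}}$. Then for every $\varepsilon>0$, as $H\to\infty$, $$\sum_{\substack{1\le d_1,d_2\le H\\ d_1\ne d_2}}\mathscr{T}_{d,|d_2-d_1|}=2\sum_{1\le h\le H-1}(H-h)\,\ma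thscr{T}_{d,h}=\beta_d^2H^2+O_\varepsilon(H^{1+\varepsilon}).$$
   Context: $m_p(h)$ is the exponent of the prime $p$ in $h$. Sets of primes: $Q_1=Q_4=\{p\equiv3\ (4)\}$, $Q_2=\{p\equiv5,7\ (8)\}$, $Q_3=\{p\equiv2\ (3)\}$ (including $2$), $Q_7=\{p\equiv3,5,6\ (7)\}$; $R_1=R_2=R_4=\{2\}$, $R_3=\{3\}$, $R_7=\{2,7\}$. The constant $\beta_d$ is $\beta_d=\delta_d\, g_d\left(\frac{2|d|\,L_d(1)}{\pi\,\varphi(2|d|)}\right)^{1/2}$ with $g_d=\prod_{p\in Q_d,\ p\ \mathrm{odd}}(1-p^{-2})^{-1/2}$, $\delta_1=\delta_2=1$, $\delta_3=\tfrac23$, $\delta_4=\delta_7=\tfrac34$, $\varphi$ Euler's totient, and $L_d(1)=\frac{\pi}{4},\frac{\pi}{2\sqrt2},\frac{\pi}{2\sqrt3},\frac{\pi}{4},\frac{\pi}{2\sqrt7}$ for $d=1,2,3,4,7$. Thus $\beta_d^2=\kappa_d\prod_{p\in Q_d,\,p\text{ odd}}(1-p^{-2})^{-1}$ with $\kappa_1=\frac12,\ \kappa_2=\frac{1}{\sqrt2},\ \kappa_3=\frac49\cdot\frac{\sqrt3}{2},\ \kappa_4=\frac{9}{16}\cdot\frac12,\ \kappa_7=\frac{9}{16}\cdot\frac{\sqrt7}{6}$. $\mathscr{T}_{d,h}$ is the conjectural pair-correlation singular series for integers of the form $x^2+dy^2$. *)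

(* Defs.v *)
From Stdlib Require Import Reals.
From mathcomp Require Import ssreflect ssrbool ssrnat div prime.

Open Scope R_scope.

Definition mp (p h : nat) : nat := logn p h.

(* membership in Q_d (only meaningful for p prime) *)
Definition inQ (d p : nat) : bool :=
  match d with
  | 1%nat | 4%nat => (eqn (p %% 4)%nat 3)
  | 2%nat => (eqn (p %% 8)%nat 5 || eqn (p %% 8)%nat 7)
  | 3%nat => (eqn (p %% 3)%nat 2)
  | 7%nat => [|| (eqn (p %% 7)%nat 3), (eqn (p %% 7)%nat 5) | (eqn (p %% 7)%nat 6)]
  | _ => false
  end.

Fixpoint prodR (f : nat -> R) (n : nat) : R :=
  match n with
  | O => 1
  | S k => prodR f k * f (S k)
  end.

Fixpoint sumR (f : nat -> R) (n : nat) : R :=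
  match n with
  | O => 0
  | S k => sumR f k + f (S k)
  end.

Definition c_const (d : nat) : R :=
  match d with
  | 1%nat => 2
  | 2%nat => 2 * sqrt 2
  | 3%nat => 2 / sqrt 3
  | 4%nat => 2
  | 7%nat => 2 * sqrt 7 / 3
  | _ => 0
  end.

Definition W12 (h : nat) : R :=
  let m := mp 2 h in
  if eqn m 0 then / 4 else (2 ^ (m + 1) - 3) / 2 ^ (m + 2).

Definition W22 (h : nat) : R :=
  let m := mp 2 h in
  if (m <= 1)%nat then / 4 else (2 ^ m - 3) / 2 ^ (m + 1).

Definition W33 (h : nat) : R :=
  let m := mp 3 h in
  / 2 * ((3 ^ (m + 1) - 2) / 3 ^ (m + 1)).

Definition W42 (h : nat) : R :=
  let m := mp 2 h in
  match m with
  | 0%nat => / 8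
  | 1%nat => 0
  | 2%nat => 5 / 16
  | _ => (3 * 2 ^ (m - 1) - 3) / 2 ^ (m + 2)
  end.

Definition W72 (h : nat) : R :=
  let m := mp 2 h in
  if (m <= 1)%nat then / 2 else 3 / 4.

Definition W77 (h : nat) : R :=
  let m := mp 7 h in
  / 2 * ((7 ^ (m + 1) - 4) / 7 ^ (m + 1)).

(* prod_{p in R_d} W_{d,p}(h) *)
Definition Wprod (d h : nat) : R :=
  match d with
  | 1%nat => W12 h
  | 2%nat => W22 h
  | 3%nat => W33 h
  | 4%nat => W42 h
  | 7%nat => W72 h * W77 h
  | _ => 0
  end.

(* prod_{p in Q_d, p | h} (1 - p^{-(m_p(h)+1)}) / (1 - p^{-1});
   all such p satisfy p <= h for h >= 1 *)
Definition Qprod (d h : nat) : R :=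
  prodR (fun p =>
    if [&& prime p, inQ d p & (p %| h)%nat]
    then (1 - / INR p ^ (mp p h + 1)) / (1 - / INR p)
    else 1) h.

Definition Tsing (d h : nat) : R := c_const d * Wprod d h * Qprod d h.

Definition ndist (a b : nat) : nat := ((a - b) + (b - a))%nat.

Definition pair_sum (d H : nat) : R :=
  sumR (fun d1 => sumR (fun d2 =>
     if eqn d1 d2 then 0 else Tsing d (ndist d2 d1)) H) H.

Definition weighted_sum (d H : nat) : R :=
  2 * sumR (fun h => INR (H - h) * Tsing d h) (H - 1).

(* partial products of prod_{p in Q_d, p odd} (1 - p^{-2})^{-1} = g_d^2 *)
Definition g2_partial (d N : nat) : R :=
  prodR (fun p =>
    if [&& prime p, odd p & inQ d p] then / (1 - / INR p ^ 2) else 1) N.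

Definition delta_const (d : nat) : R :=
  match d with
  | 1%nat | 2%nat => 1
  | 3%nat => 2 / 3
  | 4%nat | 7%nat => 3 / 4
  | _ => 0
  end.

Definition L1 (d : nat) : R :=
  match d with
  | 1%nat => PI / 4
  | 2%nat => PI / (2 * sqrt 2)
  | 3%nat => PI / (2 * sqrt 3)
  | 4%nat => PI / 4
  | 7%nat => PI / (2 * sqrt 7)
  | _ => 0
  end.

(* beta_d = delta_d * g_d * sqrt(2|d| L_d(1) / (pi phi(2|d|))), with g_d = sqrt G
   where G = prod_{p in Q_d, p odd} (1-p^{-2})^{-1} *)
Definition beta (d : nat) (G : R) : R :=
  delta_const d * sqrt G
  * sqrt (2 * INR d * L1 d / (PI * INR (totient (2 * d)))).

(* Main.v *)
Require Import Defs.
From Stdlib Require Import Reals.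
From mathcomp Require Import ssreflect ssrbool ssrnat div prime.
From Stdlib Require Import Lra Lia.
From mathcomp Require Import zify.
From HB Require Import structures.
From mathcomp Require Import ssrfun eqtype seq path fintype bigop.
Open Scope R_scope.
Set Warnings "-notation-overridden".
Lemma Rplus_assoc' : associative Rplus. Proof. move=> *; by rewrite Rplus_assoc. Qed.
Lemma Rmult_assoc' : associative Rmult. Proof. move=> *; by rewrite Rmult_assoc. Qed.
HB.instance Definition _ := Monoid.isComLaw.Build R 0 Rplus Rplus_assoc' Rplus_comm Rplus_0_l.
HB.instance Definition _ := Monoid.isComLaw.Build R 1 Rmult Rmult_assoc' Rmult_comm Rmult_1_l.
Lemma sumR_big f N : sumR f N = \big[Rplus/0]_(1 <= i < N.+1) f i.
Proof. elim: N => [|N IH] /=; first by rewrite big_geq.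
by rewrite big_nat_recr //= IH. Qed.
Lemma prodR_big f N : prodR f N = \big[Rmult/1]_(1 <= i < N.+1) f i.
Proof. elim: N => [|N IH] /=; first by rewrite big_geq.
by rewrite big_nat_recr //= IH. Qed.

Lemma sumR_ext f g N : (forall i, (1 <= i <= N)%nat -> f i = g i) -> sumR f N = sumR g N.
Proof. elim: N => [|N IH] H //=. rewrite IH ?H //; first by rewrite leqnn.
move=> i /andP[h1 h2]; apply: H; rewrite h1 /=; exact: leqW. Qed.
Lemma sumR_plus f g N : sumR (fun i => f i + g i) N = sumR f N + sumR g N.
Proof. elim: N => [|N IH] /=; [lra| rewrite IH; lra]. Qed.
Lemma sumR_scal c f N : sumR (fun i => c * f i) N = c * sumR f N.
Proof. elim: N => [|N IH] /=; [lra| rewrite IH; lra]. Qed.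
Lemma sumR_const c N : sumR (fun _ => c) N = c * INR N.
Proof. elim: N => [|N IH]; first by simpl; lra. rewrite S_INR /= IH; lra. Qed.
Lemma sumR_le f g N : (forall i, (1 <= i <= N)%nat -> f i <= g i) -> sumR f N <= sumR g N.
Proof. elim: N => [|N IH] H /=; first lra.
have := H N.+1; rewrite leqnn andbT => /(_ isT) h.
have: sumR f N <= sumR g N; last lra.
apply: IH => i /andP[h1 h2]; apply: H; rewrite h1 /=; exact: leqW. Qed.
Lemma sumR_abs f N : Rabs (sumR f N) <= sumR (fun i => Rabs (f i)) N.
Proof. elim: N => [|N IH] /=; first by rewrite Rabs_R0; lra.
have := Rabs_triang (sumR f N) (f N.+1); lra. Qed.
Lemma sumR_nonneg f N : (forall i, (1 <= i <= N)%nat -> 0 <= f i) -> 0 <= sumR f N.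
Proof. move=> H; have := sumR_le (fun _ => 0) f N H; rewrite sumR_const; lra. Qed.
Lemma sumR_exchange (f : nat -> nat -> R) N M :
  sumR (fun i => sumR (fun j => f i j) M) N = sumR (fun j => sumR (fun i => f i j) N) M.
Proof. elim: N => [|N IH] /=; first by rewrite sumR_const; lra.
by rewrite IH -sumR_plus. Qed.
Lemma sumR_rev f n : sumR (fun i => f (n.+1 - i)%nat) n = sumR f n.
Proof. rewrite !sumR_big big_nat_rev; apply: eq_big_nat => i /andP[h1 h2].
congr f; lia. Qed.

Lemma sumR_count (k : nat) (G : nat -> R) N : (0 < k)%nat ->
  sumR (fun h => if (k %| h)%nat then G h else 0) N = sumR (fun j => G (k * j)%nat) (N %/ k).
Proof. move=> k0; elim: N => [|N IH] /=; first by rewrite div0n.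
rewrite IH; case: ifP => hk.
- have e : (N.+1 %/ k = (N %/ k).+1)%nat.
    move/dvdnP: hk => [q hq]. rewrite hq mulnK //.
    have : (N = q * k - 1)%nat by lia. move=> ->.
    have qp : (0 < q)%nat by case: q hq => //=; lia.
    rewrite -(prednK qp) mulSn. rewrite -(@prednK k) //. 
    have -> : ((k.-1).+1 + q.-1 * (k.-1).+1 - 1 = k.-1 + q.-1 * (k.-1).+1)%nat by lia.
    rewrite addnC divnMDl ?divn_small ?addn0 //; lia.
  rewrite e /= -e mulnC divnK //.
- have -> : (N.+1 %/ k = N %/ k)%nat.
    have h1 := divn_eq N k; have h2 := ltn_pmod N k0.
    have h3 : (N %% k).+1 != k.
      apply/negP => /eqP e. move: hk; rewrite {1}h1 -addnS e dvdn_addr ?dvdn_mull ?dvdnn //.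
    have h4 : ((N %% k).+1 < k)%nat by rewrite ltn_neqAle h3 h2.
    rewrite {1}h1 -addnS divnMDl // (divn_small h4) addn0 //.
  rewrite /=; lra.
Qed.


Lemma pair_step (T : nat -> R) A :
  let P := fun A => sumR (fun d1 => sumR (fun d2 =>
     if eqn d1 d2 then 0 else T (ndist d2 d1)) A) A in
  P A.+1 = P A + 2 * sumR T A.
Proof.
move=> P; rewrite /P /=. rewrite sumR_plus.
have e1 : sumR (fun d1 => if eqn d1 A.+1 then 0 else T (ndist A.+1 d1)) A = sumR T A.
  rewrite -[RHS]sumR_rev; apply: sumR_ext => i /andP[h1 h2].
  have -> : eqn i A.+1 = false by apply/eqnP; lia.
  congr T; rewrite /ndist; lia.
have e2 : sumR (fun d2 => if eqn A.+1 d2 then 0 else T (ndist d2 A.+1)) A = sumR T A.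
  rewrite -[RHS]sumR_rev; apply: sumR_ext => i /andP[h1 h2].
  have -> : eqn A.+1 i = false by apply/eqnP; lia.
  congr T; rewrite /ndist; lia.
rewrite e1 e2.
have -> : eqn A A = true by apply/eqnP.
lra.
Qed.

Lemma weighted_step (T : nat -> R) A :
  let W := fun A => 2 * sumR (fun h => INR (A - h) * T h) (A - 1) in
  W A.+1 = W A + 2 * sumR T A.
Proof.
move=> W; rewrite /W. case: A => [|B] /=; first lra.
rewrite !subn1 /=.
have -> : sumR (fun h => INR (B.+2 - h) * T h) B = sumR (fun h => INR (B.+1 - h) * T h) B + sumR T B.
  rewrite -sumR_plus; apply: sumR_ext => i /andP[h1 h2].
  have -> : (B.+2 - i = (B.+1 - i).+1)%nat by lia.
  rewrite S_INR; lra.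
have -> : (B.+2 - B.+1 = 1)%nat by lia.
simpl INR; lra.
Qed.

Lemma pair_weighted d H : pair_sum d H = weighted_sum d H.
Proof.
elim: H => [|H IH].
- rewrite /pair_sum /weighted_sum /=; lra.
- rewrite /pair_sum pair_step -/(pair_sum d H) IH /weighted_sum.
  have := weighted_step (Tsing d) H; simpl; lra.
Qed.


Lemma leR_nat m n : (m <= n)%nat -> INR m <= INR n.
Proof. by move/leP; apply: le_INR. Qed.
Lemma INR_mul m n : INR (m * n)%nat = INR m * INR n.
Proof. by rewrite -mult_INR. Qed.

Definition HM (G : nat -> R) (g E : R) := forall M, Rabs (sumR G M - g * INR M) <= E.

Lemma HM_E0 G g E : HM G g E -> 0 <= E.
Proof. move=> /(_ 0%nat) /=. rewrite Rmult_0_r Rminus_0_r Rabs_R0. lra. Qed.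

Lemma HM_one : HM (fun _ => 1) 1 0.
Proof. move=> M; rewrite sumR_const. rewrite Rmult_1_l Rminus_diag Rabs_R0; lra. Qed.

Lemma HM_lin a b G G' g g' E E' : HM G g E -> HM G' g' E' ->
  HM (fun j => a * G j + b * G' j) (a * g + b * g') (Rabs a * E + Rabs b * E').
Proof.
move=> h h' M; rewrite sumR_plus !sumR_scal.
have -> : a * sumR G M + b * sumR G' M - (a * g + b * g') * INR M =
   a * (sumR G M - g * INR M) + b * (sumR G' M - g' * INR M) by ring.
apply: Rle_trans; first apply: Rabs_triang.
rewrite !Rabs_mult; apply: Rplus_le_compat; apply: Rmult_le_compat_l;
  try apply: Rabs_pos; [exact: h | exact: h'].
Qed.

Lemma HM_ext G G' g E : (forall j, (0 < j)%nat -> G j = G' j) -> HM G g E -> HM G' g E.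
Proof. move=> e h M; rewrite -(sumR_ext G); first exact: h.
move=> i /andP[h1 _]; exact: e. Qed.

Lemma floor_bounds M K : (0 < K)%nat ->
  INR K * INR (M %/ K) <= INR M /\ INR M <= INR K * INR (M %/ K) + INR K - 1.
Proof.
move=> K0; split.
- rewrite -INR_mul; apply: leR_nat. rewrite mulnC; exact: leq_divM.
- have h := ltn_ceil M K0. have h2 : (M.+1 <= K * (M %/ K) + K)%nat by rewrite mulnC -mulSnr.
  have := leR_nat _ _ h2. rewrite S_INR plus_INR INR_mul. lra.
Qed.

Lemma HM_div K G g E : (0 < K)%nat -> (forall i, G (K * i)%nat = G i) -> HM G g E ->
  HM (fun j => if (K %| j)%nat then G j else 0) (g / INR K) (E + Rabs g).
Proof.
move=> K0 hG h M. rewrite sumR_count //.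
rewrite (sumR_ext _ G); last by move=> i _; apply: hG.
have hK : 0 < INR K by apply: lt_0_INR; apply/ltP.
have [b1 b2] := floor_bounds M _ K0.
have -> : sumR G (M %/ K) - g / INR K * INR M =
   (sumR G (M %/ K) - g * INR (M %/ K)) + g * (INR (M %/ K) - INR M / INR K) by field; lra.
apply: Rle_trans; first apply: Rabs_triang.
apply: Rplus_le_compat; first exact: h.
rewrite Rabs_mult. rewrite -{2}(Rmult_1_r (Rabs g)). apply: Rmult_le_compat_l; first exact: Rabs_pos.
apply: Rabs_le; split.
- have : INR M / INR K <= INR (M %/ K) + 1 - / INR K.
    apply: (Rmult_le_reg_l (INR K)) => //.
    replace (INR K * (INR M / INR K)) with (INR M) by (field; lra).
    replace (INR K * (INR (M %/ K) + 1 - / INR K)) with (INR K * INR (M %/ K) + INR K - 1) by (field; lra). lra.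
  have : 0 < / INR K by apply: Rinv_0_lt_compat. lra.
- have : INR (M %/ K) <= INR M / INR K.
    apply: (Rmult_le_reg_l (INR K)) => //.
    replace (INR K * (INR M / INR K)) with (INR M) by (field; lra). lra.
  lra.
Qed.

Lemma logn_qmul q i : prime q -> (0 < i)%nat -> logn q (q * i) = (logn q i).+1.
Proof. move=> pq i0; rewrite (lognM _ (prime_gt0 pq) i0) (logn_prime _ pq) eqxx. by []. Qed.
Lemma logn_ndvd q j : ~~ (q %| j)%nat -> logn q j = 0%nat.
Proof. move=> h. apply/eqP; rewrite -leqn0 leqNgt logn_gt0 mem_primes.
by rewrite (negbTE h) !andbF. Qed.

Lemma HM_geom q G g E s : prime q -> (forall i, G (q * i)%nat = G i) -> HM G g E ->
  0 <= s <= 1/2 ->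
  HM (fun j => G j * s ^ logn q j) (g * (INR q - 1) / (INR q - s)) ((2 * E + Rabs g) / (1 - s)).
Proof.
move=> pq hG h [s0 s1].
set F := fun j => G j * s ^ logn q j.
have q0 : (0 < q)%nat by exact: prime_gt0.
have q2 : 2 <= INR q by have := leR_nat _ _ (prime_gt1 pq); simpl; lra.
have rec : forall M, sumR F M = sumR G M - sumR G (M %/ q) + s * sumR F (M %/ q).
  move=> M.
  have -> : sumR F M = sumR (fun j => if (q %| j)%nat then F j else 0) M +
                      sumR (fun j => G j - (if (q %| j)%nat then G j else 0)) M.
    rewrite -sumR_plus; apply: sumR_ext => j _; rewrite /F.
    case: ifP => hq; first lra.
    rewrite logn_ndvd ?hq //=; lra.
  have -> : sumR (fun j => G j - (if (q %| j)%nat then G j else 0)) M =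
            sumR G M - sumR (fun j => if (q %| j)%nat then G j else 0) M.
    have := sumR_plus G (fun j => - (if (q %| j)%nat then G j else 0)) M.
    have := sumR_scal (-1) (fun j => (if (q %| j)%nat then G j else 0)) M.
    move=> e1 e2. 
    have -> : sumR (fun j => G j - (if (q %| j)%nat then G j else 0)) M =
       sumR (fun i => G i + - (if (q %| i)%nat then G i else 0)) M by [].
    rewrite e2. rewrite (sumR_ext (fun i => - (if (q %| i)%nat then G i else 0))
        (fun i => -1 * (if (q %| i)%nat then G i else 0))); last by move=> *; ring.
    rewrite e1; ring.
  rewrite !sumR_count //. rewrite (sumR_ext (fun j => G (q * j)%nat) G); last by move=> *; apply: hG.
  rewrite (sumR_ext (fun j => F (q * j)%nat) (fun j => s * F j)).
    rewrite sumR_scal; ring.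
  move=> i /andP[i1 _]; rewrite /F hG logn_qmul //=; ring.
have E0 := HM_E0 _ _ _ h.
set U := (INR q - 1) / (INR q - s).
have -> : g * (INR q - 1) / (INR q - s) = g * U by rewrite /U; field; lra.
elim/ltn_ind => M IH.
case: (posnP M) => [->|M0].
  rewrite /= Rmult_0_r Rminus_0_r Rabs_R0. apply: Rmult_le_pos; first by have := Rabs_pos g; lra.
  apply: Rlt_le; apply: Rinv_0_lt_compat; lra.
set M' := (M %/ q)%nat.
have hM' : (M' < M)%nat by apply: ltn_Pdiv => //; exact: prime_gt1.
have IH' := IH _ hM'.
have [b1 b2] := floor_bounds M q q0. rewrite -/M' in b1 b2.
rewrite rec -/M'.
set x := INR M in b1 b2 *. set y := INR M' in b1 b2 IH' *. set Q := INR q in b1 b2 q2 *.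
have key : sumR G M - sumR G M' + s * sumR F M' - g * U * x =
  (sumR G M - g * x) - (sumR G M' - g * y) + s * (sumR F M' - g * U * y)
   + g * ((1 - s) / (Q - s) * (x - Q * y)).
  have qs : INR q - s <> 0 by rewrite /Q in q2; lra.
  rewrite /U /Q; field; exact: qs.
rewrite key.
have r0 : 0 <= (1 - s) / (Q - s) by apply: Rmult_le_pos; [lra| apply: Rlt_le; apply: Rinv_0_lt_compat; lra].
have r1 : (1 - s) / (Q - s) * (Q - 1) <= 1.
  apply: (Rmult_le_reg_l (Q - s)); first lra.
  replace ((Q - s) * ((1 - s) / (Q - s) * (Q - 1))) with ((1 - s) * (Q - 1)) by (field; lra).
  nra.
have t1 : Rabs ((1 - s) / (Q - s) * (x - Q * y)) <= 1.
  rewrite Rabs_pos_eq; last by apply: Rmult_le_pos; lra.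
  apply: Rle_trans r1. apply: Rmult_le_compat_l; lra.
have hM := h M. have hM2 := h M'. rewrite -/x in hM. rewrite -/y in hM2.
have t2 : Rabs (g * ((1 - s) / (Q - s) * (x - Q * y))) <= Rabs g.
  rewrite Rabs_mult -{2}(Rmult_1_r (Rabs g)); apply: Rmult_le_compat_l => //; exact: Rabs_pos.
have t3 : Rabs (s * (sumR F M' - g * U * y)) <= s * ((2 * E + Rabs g) / (1 - s)).
  rewrite Rabs_mult Rabs_pos_eq //; apply: Rmult_le_compat_l => //.
have e : 2 * E + Rabs g + s * ((2 * E + Rabs g) / (1 - s)) = (2 * E + Rabs g) / (1 - s) by field; lra.
rewrite -e.
set a := sumR G M - g * x in hM *. set b := sumR G M' - g * y in hM2 *.
set c := s * (sumR F M' - g * U * y) in t3 *. set dd := g * ((1 - s) / (Q - s) * (x - Q * y)) in t2 *.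
have := Rabs_triang (a - b + c) dd. have := Rabs_triang (a - b) c.
have := Rabs_triang a (- b). rewrite Rabs_Ropp. 
replace (a + - b) with (a - b) by ring. lra.
Qed.


Lemma HM_fin G G' g g' E : (forall j, (0 < j)%nat -> G j = G' j) -> g = g' -> HM G g E -> HM G' g' E.
Proof. move=> e <- h; exact: HM_ext e h. Qed.

Lemma dvd_pow_logn p n j : prime p -> (0 < j)%nat -> (p ^ n %| j)%nat = (n <= logn p j)%nat.
Proof. move=> pp j0; exact: pfactor_dvdn. Qed.

Lemma pow_invR x n : x <> 0 -> (/ x) ^ n = / x ^ n.
Proof. move=> h; by rewrite pow_inv. Qed.

Lemma HM_W1 : exists E, HM (Wprod 1) (/4) E.
Proof.
have h1 := HM_one.
have h2 := HM_div 2 (fun _ => 1) _ _ isT (fun i => erefl) h1.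
have h3 := HM_geom 2 (fun _ => 1) _ _ (/2) isT (fun i => erefl) h1 ltac:(lra).
have h4 := HM_lin 1 (-3/4) _ _ _ _ _ _ h1 h3.
have h5 := HM_lin 1 (-1/2) _ _ _ _ _ _ h4 h2.
eexists; apply: (HM_fin _ _ _ _ _ _ _ h5).
- move=> j j0 /=. rewrite /W12 /mp.
  have e2 := dvd_pow_logn 2 1 j isT j0. rewrite expn1 in e2. rewrite e2.
  case: (logn 2 j) => [|v] /=.
  + field.
  + rewrite !addn1 !addn2 pow_invR /=; last lra.
    have : 0 < 2 ^ v by apply: pow_lt; lra. move=> hv. field. lra.
- simpl INR. field.
Qed.

Lemma HM_W2 : exists E, HM (Wprod 2) (/4) E.
Proof.
have h1 := HM_one.
have h2 := HM_div 2 (fun _ => 1) _ _ isT (fun i => erefl) h1.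
have h4 := HM_div 4 (fun _ => 1) _ _ isT (fun i => erefl) h1.
have h3 := HM_geom 2 (fun _ => 1) _ _ (/2) isT (fun i => erefl) h1 ltac:(lra).
have hA := HM_lin (7/4) (-3/2) _ _ _ _ _ _ h1 h3.
have hB := HM_lin 1 (-3/4) _ _ _ _ _ _ hA h2.
have hC := HM_lin 1 (-1/2) _ _ _ _ _ _ hB h4.
eexists; apply: (HM_fin _ _ _ _ _ _ _ hC).
- move=> j j0 /=. rewrite /W22 /mp.
  have e2 := dvd_pow_logn 2 1 j isT j0. rewrite expn1 in e2. rewrite e2.
  have e4 : (4 %| j)%nat = (2 <= logn 2 j)%nat := dvd_pow_logn 2 2 j isT j0. rewrite e4.
  case: (logn 2 j) => [|[|v]] /=.
  + field.
  + field.
  + rewrite !addn1 pow_invR /=; last lra.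
    have : 0 < 2 ^ v by apply: pow_lt; lra. move=> hv. field. lra.
- simpl INR. field.
Qed.

Lemma HM_W3 : exists E, HM (Wprod 3) (/4) E.
Proof.
have h1 := HM_one.
have h3 := HM_geom 3 (fun _ => 1) _ _ (/3) isT (fun i => erefl) h1 ltac:(lra).
have hA := HM_lin (1/2) (-1/3) _ _ _ _ _ _ h1 h3.
eexists; apply: (HM_fin _ _ _ _ _ _ _ hA).
- move=> j j0 /=. rewrite /W33 /mp.
  case: (logn 3 j) => [|v] /=.
  + field.
  + rewrite !addn1 pow_invR /=; last lra.
    have : 0 < 3 ^ v by apply: pow_lt; lra. move=> hv. field. lra.
- simpl INR. field.
Qed.

Lemma HM_W4 : exists E, HM (Wprod 4) (9/64) E.
Proof.
have h1 := HM_one.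
have h2 := HM_div 2 (fun _ => 1) _ _ isT (fun i => erefl) h1.
have h4 := HM_div 4 (fun _ => 1) _ _ isT (fun i => erefl) h1.
have h8 := HM_div 8 (fun _ => 1) _ _ isT (fun i => erefl) h1.
have h3 := HM_geom 2 (fun _ => 1) _ _ (/2) isT (fun i => erefl) h1 ltac:(lra).
have hA := HM_lin (7/8) (-3/4) _ _ _ _ _ _ h1 h3.
have hB := HM_lin 1 (-1/2) _ _ _ _ _ _ hA h2.
have hC := HM_lin 1 (1/8) _ _ _ _ _ _ hB h4.
have hD := HM_lin 1 (-1/8) _ _ _ _ _ _ hC h8.
eexists; apply: (HM_fin _ _ _ _ _ _ _ hD).
- move=> j j0 /=. rewrite /W42 /mp.
  have e2 := dvd_pow_logn 2 1 j isT j0. rewrite expn1 in e2. rewrite e2.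
  have e4 : (4 %| j)%nat = (2 <= logn 2 j)%nat := dvd_pow_logn 2 2 j isT j0. rewrite e4.
  have e8 : (8 %| j)%nat = (3 <= logn 2 j)%nat := dvd_pow_logn 2 3 j isT j0. rewrite e8.
  case: (logn 2 j) => [|[|[|v]]] /=.
  + field.
  + field.
  + field.
  + rewrite !addn2 ?subn1 pow_invR /=; last lra.
    have : 0 < 2 ^ v by apply: pow_lt; lra. move=> hv. field. lra.
- simpl INR. field.
Qed.

Lemma HM_W7 : exists E, HM (Wprod 7) (9/64) E.
Proof.
have h1 := HM_one.
have h4 := HM_div 4 (fun _ => 1) _ _ isT (fun i => erefl) h1.
have hg := HM_geom 7 (fun _ => 1) _ _ (/7) isT (fun i => erefl) h1 ltac:(lra).
have hG4 : forall i, (if (4 %| 7 * i)%nat then 1 else 0) = (if (4 %| i)%nat then 1 else 0).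
  move=> i; by rewrite Gauss_dvdr.
have h47 := HM_geom 7 _ _ _ (/7) isT hG4 h4 ltac:(lra).
have hA := HM_lin (1/4) (1/8) _ _ _ _ _ _ h1 h4.
have hB := HM_lin 1 (-1/7) _ _ _ _ _ _ hA hg.
have hC := HM_lin 1 (-1/14) _ _ _ _ _ _ hB h47.
eexists; apply: (HM_fin _ _ _ _ _ _ _ hC).
- move=> j j0 /=. rewrite /W72 /W77 /mp.
  have e4 : (4 %| j)%nat = (2 <= logn 2 j)%nat := dvd_pow_logn 2 2 j isT j0. rewrite e4.
  rewrite !addn1 pow_invR /=; last lra.
  have : 0 < 7 ^ logn 7 j by apply: pow_lt; lra. move=> hv.
  case: (logn 2 j) => [|[|v]] /=.
  + field. lra.
  + field. lra.
  + field. lra.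
- simpl INR. field.
Qed.


Lemma bigR_distr (c : R) (s : seq nat) (F : nat -> R) :
  \big[Rplus/0]_(i <- s) (c * F i) = c * \big[Rplus/0]_(i <- s) F i.
Proof. elim: s => [|x s IH]; rewrite ?big_nil ?big_cons; [lra| rewrite IH; lra]. Qed.

Lemma f_pow (f : nat -> R) (f1 : f 1%nat = 1)
  (fM : forall a b, (0 < a)%nat -> (0 < b)%nat -> f (a * b)%nat = f a * f b) p j : (0 < p)%nat -> f (p ^ j)%nat = f p ^ j.
Proof. move=> p0; elim: j => [|j IH]; first by rewrite expn0 f1.
rewrite expnS fM ?expn_gt0 ?p0 // IH /=. by []. Qed.

Lemma logn_dvd0 p k m : (0 < m)%nat -> logn p m = 0%nat -> (k %| m)%nat -> logn p k = 0%nat.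
Proof. move=> m0 lm km; have := dvdn_leq_log p m0 km; rewrite lm; lia. Qed.

Lemma mult_expand (f : nat -> R) (f1 : f 1%nat = 1)
  (fM : forall a b, (0 < a)%nat -> (0 < b)%nat -> f (a * b)%nat = f a * f b) n : (0 < n)%nat ->
  \big[Rplus/0]_(k <- divisors n) f k =
  \big[Rmult/1]_(p <- primes n) \big[Rplus/0]_(0 <= j < (logn p n).+1) f p ^ j.
Proof.
elim/ltn_ind: n => n IH n0.
case: (ltnP 1 n) => n1; last first.
  have -> : n = 1%nat by lia.
  have -> : divisors 1 = [:: 1%nat] by [].
  have -> : primes 1 = [::] by [].
  rewrite big_seq1 big_nil f1; done.
have [p pp pn] := pdivP n1.
have p0 : (0 < p)%nat by exact: prime_gt0.
set a := logn p n.
set m := (n %/ p ^ a)%nat.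
have a0 : (0 < a)%nat by rewrite /a logn_gt0 mem_primes pp n0 pn.
have hpa : (p ^ a %| n)%nat by exact: pfactor_dvdnn.
have hn : n = (p ^ a * m)%nat by rewrite /m mulnC divnK.
have pa0 : (0 < p ^ a)%nat by rewrite expn_gt0 p0.
have m0 : (0 < m)%nat by move: n0; rewrite hn muln_gt0 => /andP[].
have lm : logn p m = 0%nat by rewrite /m logn_div // pfactorK // subnn.
have pa2 : (2 <= p ^ a)%nat.
  have := prime_gt1 pp. move=> h1. apply: leq_trans h1 _. 
  rewrite -{1}(expn1 p). apply: leq_pexp2l => //.
have mn : (m < n)%nat by rewrite [X in (_ < X)%nat]hn; nia.
have IHm := IH m mn m0.
have perm1 : perm_eq (divisors n) [seq (p ^ j * k)%nat | j <- index_iota 0 a.+1, k <- divisors m].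
  apply: uniq_perm; first exact: divisors_uniq.
  - apply: allpairs_uniq; [exact: iota_uniq | exact: divisors_uniq|].
    move=> [j k] [j' k'] hjk hjk' e.
    have hy : k \in divisors m.
      by case/allpairsP: hjk => [[x y] [/= _ hy' [_ ->]]].
    have hy' : k' \in divisors m.
      by case/allpairsP: hjk' => [[x y] [/= _ hy'' [_ ->]]].
    move: e => /= e.
    have k0 : (0 < k)%nat by move: hy; rewrite -dvdn_divisors // => /(dvdn_gt0 m0).
    have k0' : (0 < k')%nat by move: hy'; rewrite -dvdn_divisors // => /(dvdn_gt0 m0).
    have lk : logn p k = 0%nat by apply: (logn_dvd0 _ _ m m0 lm); rewrite dvdn_divisors.
    have lk' : logn p k' = 0%nat by apply: (logn_dvd0 _ _ m m0 lm); rewrite dvdn_divisors.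
    have ej : j = j'.
      have := congr1 (logn p) e. rewrite !lognM ?expn_gt0 ?p0 // !lognX lk lk' (logn_prime _ pp) eqxx.
      lia.
    subst j'. congr pair. apply/eqP. have pj0 : (0 < p ^ j)%nat by rewrite expn_gt0 p0. rewrite -(eqn_pmul2l pj0).
      by rewrite e.
  - move=> d; rewrite -dvdn_divisors //; apply/idP/allpairsP.
    + move=> dn. have d0 : (0 < d)%nat by exact: dvdn_gt0 n0 dn.
      set j := logn p d.
      have hpj : (p ^ j %| d)%nat by exact: pfactor_dvdnn.
      exists (j, d %/ p ^ j)%nat; split => /=.
      * rewrite mem_iota /=. have := dvdn_leq_log p n0 dn. rewrite -/a -/j. lia.
      * rewrite -dvdn_divisors //.
        set k := (d %/ p ^ j)%nat.
        have hk : d = (k * p ^ j)%nat by rewrite /k divnK.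
        have k0 : (0 < k)%nat by move: d0; rewrite hk muln_gt0 => /andP[].
        have lk : logn p k = 0%nat by rewrite /k logn_div // pfactorK // subnn.
        have cpk : coprime p k.
          rewrite prime_coprime //. apply/negP => pk.
          have : (0 < logn p k)%nat by rewrite logn_gt0 mem_primes pp k0 pk.
          by rewrite lk.
        have ck : coprime k (p ^ a) by rewrite coprime_sym; apply: coprimeXl.
        rewrite -(Gauss_dvdr _ ck) -hn.
        apply: dvdn_trans dn. rewrite hk; exact: dvdn_mulr.
      * by rewrite mulnC divnK.
    + move=> [[j k] [/= hj hk ->]]. rewrite hn. apply: dvdn_mul.
      * apply: dvdn_exp2l. move: hj; rewrite mem_iota. lia.
      * by rewrite dvdn_divisors.
have perm2 : perm_eq (primes n) (p :: primes m).
  apply: uniq_perm; first exact: primes_uniq.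
  - rewrite /= primes_uniq andbT. rewrite mem_primes. apply/negP => /and3P[_ _ pm].
    have : (0 < logn p m)%nat by rewrite logn_gt0 mem_primes pp m0 pm.
    by rewrite lm.
  - move=> q; rewrite hn primesM // primesX // primes_prime // !inE. done.
rewrite (perm_big _ perm1) (perm_big _ perm2) big_cons.
rewrite -[in LHS](map_allpairs (fun jk => (p ^ jk.1 * jk.2)%nat) (@pair nat nat)).
rewrite big_map big_allpairs /=.
have e1 : forall j, \big[Rplus/0]_(k <- divisors m) f (p ^ j * k)%nat =
                    f p ^ j * \big[Rplus/0]_(k <- divisors m) f k.
  move=> j; rewrite -bigR_distr; apply: eq_big_seq => k hk.
  have k0 : (0 < k)%nat by move: hk; rewrite -dvdn_divisors // => /(dvdn_gt0 m0).
  rewrite fM ?expn_gt0 ?p0 // (f_pow _ f1 fM) //.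
rewrite (eq_bigr _ (fun j _ => e1 j)) IHm.
have e2 : \big[Rmult/1]_(q <- primes m) \big[Rplus/0]_(0 <= j < (logn q m).+1) f q ^ j =
          \big[Rmult/1]_(q <- primes m) \big[Rplus/0]_(0 <= j < (logn q n).+1) f q ^ j.
  apply: eq_big_seq => q hq.
  have qp : q != p.
    apply/negP => /eqP eq; subst q. move: hq; rewrite mem_primes => /and3P[_ _ pm].
    have : (0 < logn p m)%nat by rewrite logn_gt0 mem_primes pp m0 pm.
    by rewrite lm.
  have qpr : prime q by move: hq; rewrite mem_primes => /andP[].
  have -> : logn q n = logn q m.
    rewrite hn lognM // lognX (logn_prime _ pp) (negbTE qp) muln0 add0n //.
  done.
rewrite -e2.
set S := \big[Rmult/1]_(q <- primes m) _.
set T := \big[Rplus/0]_(0 <= j < a.+1) f p ^ j.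
have : \big[Rplus/0]_(j <- index_iota 0 a.+1) (f p ^ j * S) = T * S.
  rewrite /T. elim: (index_iota 0 a.+1) => [|x s IHs]; rewrite ?big_nil ?big_cons; [lra| rewrite IHs; lra].
done.
Qed.


Definition inS d k := all (inQ d) (primes k).
Definition fS d e k : R := if inS d k then / INR k ^ e else 0.

Lemma inS_mul d a b : (0 < a)%nat -> (0 < b)%nat -> inS d (a * b) = inS d a && inS d b.
Proof. move=> a0 b0; rewrite /inS -all_cat; apply: eq_all_r => p.
by rewrite primesM // mem_cat. Qed.

Lemma INR_posn n : (0 < n)%nat -> 0 < INR n.
Proof. move=> h; apply: lt_0_INR; exact/ltP. Qed.

Lemma fS_1 d e : fS d e 1 = 1.
Proof. rewrite /fS /inS /=. rewrite pow1 Rinv_1 //. Qed.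

Lemma fS_M d e a b : (0 < a)%nat -> (0 < b)%nat -> fS d e (a * b) = fS d e a * fS d e b.
Proof. move=> a0 b0; rewrite /fS inS_mul //.
case: (inS d a); case: (inS d b) => /=; try ring.
rewrite INR_mul Rpow_mult_distr Rinv_mult //. Qed.

Lemma fS_prime d e p : prime p -> fS d e p = if inQ d p then / INR p ^ e else 0.
Proof. move=> pp; rewrite /fS /inS primes_prime //= andbT //. Qed.

Lemma fS_nonneg d e k : 0 <= fS d e k.
Proof. rewrite /fS; case: ifP => _; last lra.
case: k => [|k]; first by case: e => [|e] /=; rewrite ?Rmult_0_l ?Rinv_0; lra.
apply: Rlt_le; apply: Rinv_0_lt_compat; apply: pow_lt; apply: INR_posn. done. Qed.

Lemma filter_iota_sorted (P : pred nat) a b : sorted ltn [seq p <- index_iota a b | P p].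
Proof. apply: sorted_filter; [exact: ltn_trans| exact: iota_ltn_sorted]. Qed.

Lemma primes_filter n N : (0 < n)%nat -> (n <= N)%nat ->
  [seq p <- index_iota 1 N.+1 | prime p && (p %| n)%nat] = primes n.
Proof. move=> n0 nN. apply: (irr_sorted_eq (leT := ltn) ltn_trans ltnn).
- exact: filter_iota_sorted.
- exact: sorted_primes.
- move=> p; rewrite mem_filter mem_iota mem_primes n0 /=.
  case pp: (prime p) => //=. case pn: (p %| n)%nat => //=.
  have := dvdn_leq n0 pn. have := prime_gt0 pp. lia.
Qed.

Lemma divisors_filter n N : (0 < n)%nat -> (n <= N)%nat ->
  [seq k <- index_iota 1 N.+1 | (k %| n)%nat] = divisors n.
Proof. move=> n0 nN. apply: (irr_sorted_eq (leT := ltn) ltn_trans ltnn).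
- exact: filter_iota_sorted.
- exact: sorted_divisors_ltn.
- move=> k; rewrite mem_filter mem_iota -dvdn_divisors //.
  case kn: (k %| n)%nat => //=.
  have := dvdn_leq n0 kn. have := dvdn_gt0 n0 kn. lia.
Qed.

Lemma div_sum (F : nat -> R) n N : (0 < n)%nat -> (n <= N)%nat ->
  \big[Rplus/0]_(k <- divisors n) F k = sumR (fun k => if (k %| n)%nat then F k else 0) N.
Proof. move=> n0 nN. rewrite -(divisors_filter n N) // big_filter big_mkcond sumR_big //. Qed.

Lemma geom_sum x n : x <> 1 -> \big[Rplus/0]_(0 <= j < n) x ^ j = (1 - x ^ n) / (1 - x).
Proof. move=> x1. have h : 1 - x <> 0 by lra.
elim: n => [|n IH]; first by rewrite big_geq //= ; field.
rewrite big_nat_recr //= IH. field. exact: h. Qed.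

Lemma prodR_primes (g : nat -> R) n : (0 < n)%nat ->
  prodR (fun p => if prime p && (p %| n)%nat then g p else 1) n = \big[Rmult/1]_(p <- primes n) g p.
Proof. move=> n0; rewrite -(primes_filter n n) // big_filter big_mkcond prodR_big //. Qed.

Lemma prodR_ext f g N : (forall i, f i = g i) -> prodR f N = prodR g N.
Proof. move=> e; elim: N => [|N IH] //=; by rewrite IH e. Qed.

Lemma Qprod_eq d h : (0 < h)%nat -> Qprod d h = \big[Rplus/0]_(k <- divisors h) fS d 1 k.
Proof.
move=> h0. rewrite (mult_expand _ (fS_1 d 1) (fS_M d 1)) //.
rewrite /Qprod -prodR_primes //.
apply: prodR_ext => p. rewrite /=.
case pp: (prime p) => //=. case pn: (p %| h)%nat; rewrite ?andbF ?andbT //=.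
rewrite fS_prime //. have p1 := prime_gt1 pp. have hp : 1 < INR p.
  have := le_INR 2 p (ltP p1). simpl. lra.
case: (inQ d p) => /=.
- rewrite Rmult_1_r.
  have hx : / INR p < 1 by rewrite -Rinv_1; apply: Rinv_lt_contravar; lra.
  rewrite geom_sum; last lra.
  rewrite /mp addn1 ?pow_inv //.
- rewrite big_nat_recl //. rewrite pow_O. 
  rewrite (eq_bigr (fun _ => 0)); last by move=> i _; rewrite /= Rmult_0_l.
  rewrite big1_eq /=. lra.
Qed.

Lemma sum_WQ (W : nat -> R) d N :
  (forall k j, (0 < k)%nat -> inS d k -> W (k * j)%nat = W j) ->
  sumR (fun h => W h * Qprod d h) N = sumR (fun k => fS d 1 k * sumR W (N %/ k)) N.
Proof.
move=> hW.
rewrite (sumR_ext _ (fun h => sumR (fun k => if (k %| h)%nat then W h * fS d 1 k else 0) N)); last first.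
  move=> h /andP[h1 h2]. rewrite Qprod_eq // (div_sum _ h N) // -sumR_scal.
  apply: sumR_ext => k _; case: ifP => _; lra.
rewrite sumR_exchange; apply: sumR_ext => k /andP[k1 _].
rewrite (sumR_ext _ (fun h => fS d 1 k * (if (k %| h)%nat then W h else 0))); last first.
  move=> h _; case: ifP => _; lra.
rewrite sumR_scal sumR_count //.
rewrite /fS; case hk: (inS d k); last lra.
congr Rmult; apply: sumR_ext => j _; exact: hW.
Qed.

Lemma logn_inS d k j q : (0 < k)%nat -> inS d k -> prime q -> inQ d q = false ->
  logn q (k * j) = logn q j.
Proof. move=> k0 hk pq hq. apply: logn_Gauss. rewrite prime_coprime //.
apply/negP => qk. have : q \in primes k by rewrite mem_primes pq k0 qk.
move: hk; rewrite /inS => /allP h /h. by rewrite hq. Qed.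

Lemma Wprod_inv d k j : (0 < k)%nat -> inS d k -> Wprod d (k * j) = Wprod d j.
Proof. move=> k0 hk.
case: d hk => [|[|[|[|[|[|[|[|d]]]]]]]] hk //=;
 rewrite ?/W12 ?/W22 ?/W33 ?/W42 ?/W72 ?/W77 /mp ?(logn_inS _ _ j 2 k0 hk) ?(logn_inS _ _ j 3 k0 hk) ?(logn_inS _ _ j 7 k0 hk) //.
Qed.


Definition Zs d N := sumR (fS d 2) N.
Definition Hn N := sumR (fun k => / INR k) N.

Lemma fS_le d e k : (1 <= k)%nat -> fS d e k <= / INR k ^ e.
Proof. move=> k1; rewrite /fS; case: ifP => _; first lra.
apply: Rlt_le; apply: Rinv_0_lt_compat; apply: pow_lt; exact: INR_posn. Qed.

Lemma fS2_eq d k : fS d 2 k = fS d 1 k * / INR k.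
Proof. rewrite /fS; case: ifP => _ /=; last lra.
rewrite !Rmult_1_r Rinv_mult //. Qed.

Lemma Zs_tail d N M : (1 <= N)%nat -> (N <= M)%nat -> Zs d M - Zs d N <= / INR N - / INR M.
Proof. move=> N1; elim: M => [|M IH] hM; first lia.
case: (ltnP N M.+1) => h; last first.
  have -> : M.+1 = N by lia. lra.
have := IH ltac:(lia). rewrite /Zs.
change (sumR (fS d 2) M.+1) with (sumR (fS d 2) M + fS d 2 M.+1).
have hf := fS_le d 2 M.+1 isT.
have hM0 : 0 < INR M by apply: INR_posn; lia.
have e : / INR M.+1 ^ 2 <= / INR M - / INR M.+1.
  rewrite S_INR. simpl. 
  have : / ((INR M + 1) * ((INR M + 1) * 1)) <= / (INR M * (INR M + 1)).
    apply: Rinv_le_contravar; nra.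
  have -> : / INR M - / (INR M + 1) = / (INR M * (INR M + 1)) by field; lra.
  done.
lra.
Qed.

Lemma Zs_growing d : Un_growing (Zs d).
Proof. move=> n; rewrite /Zs /=; have := fS_nonneg d 2 n.+1; lra. Qed.

Lemma Zs_ub d : has_ub (Zs d).
Proof. exists 2 => x [n ->]. case: n => [|n]; first by rewrite /Zs /=; lra.
have := Zs_tail d 1 n.+1 isT isT. rewrite /Zs /= fS_1.
have : 0 < / INR n.+1 by apply: Rinv_0_lt_compat; apply: INR_posn. simpl. lra. Qed.

Lemma cv_le (u : nat -> R) l b N0 : Un_cv u l -> (forall n, (N0 <= n)%nat -> u n <= b) -> l <= b.
Proof. move=> hu hb. apply: Rnot_lt_le => hl.
have [N hN] := hu (l - b) ltac:(lra).
have := hN (maxn N N0) ltac:(apply/leP; lia). have := hb (maxn N N0) ltac:(lia).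
rewrite /R_dist => h1 h2. have := Rle_abs (u (maxn N N0) - l). have := Rabs_minus_sym (u (maxn N N0)) l.
have := Rle_abs (l - u (maxn N N0)). lra. Qed.

Lemma Z_bounds d Z N : Un_cv (Zs d) Z -> (1 <= N)%nat -> Zs d N <= Z /\ Z - Zs d N <= / INR N.
Proof. move=> hZ N1; split; first exact: growing_ineq (Zs_growing d) hZ N.
have : Z <= Zs d N + / INR N.
  apply: (cv_le _ _ _ N hZ) => n hn. have := Zs_tail d N n N1 hn.
  have : 0 <= / INR n by apply: Rlt_le; apply: Rinv_0_lt_compat; apply: INR_posn; lia. lra.
lra. Qed.

Lemma ln_le' x y : 0 < x -> x <= y -> ln x <= ln y.
Proof. move=> x0 /Rle_lt_or_eq_dec [h|->]; last lra.
apply: Rlt_le; exact: ln_increasing. Qed.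

Lemma Hn_ln N : (1 <= N)%nat -> Hn N <= 1 + ln (INR N).
Proof. elim: N => [|N IH] // _.
case: (posnP N) => [->|N0]; first by rewrite /Hn /= ln_1 Rinv_1; lra.
have := IH N0. rewrite /Hn => h.
change (sumR (fun k => / INR k) N.+1) with (sumR (fun k => / INR k) N + / INR N.+1).
have hN : 0 < INR N by exact: INR_posn.
have e : / INR N.+1 <= ln (INR N.+1) - ln (INR N).
  rewrite S_INR.
  have h1 : 1 + (- / (INR N + 1)) <= exp (- / (INR N + 1)) by apply: exp_ineq1_le.
  have h2 : 1 + - / (INR N + 1) = INR N / (INR N + 1) by field; lra.
  rewrite h2 in h1.
  have h3 : ln (INR N / (INR N + 1)) <= - / (INR N + 1).
    rewrite -(ln_exp (- / (INR N + 1))). apply: ln_le' => //.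
    apply: Rdiv_lt_0_compat; lra.
  rewrite /Rdiv ln_mult ?ln_Rinv in h3; try lra. apply: Rinv_0_lt_compat; lra.
lra.
Qed.

Lemma sum_bound (a : nat -> R) c N : (forall k, (1 <= k <= N)%nat -> Rabs (a k) <= c * / INR k) ->
  Rabs (sumR a N) <= c * Hn N.
Proof. move=> h. apply: Rle_trans; first exact: sumR_abs.
rewrite /Hn -sumR_scal. exact: sumR_le. Qed.

Lemma floor_err N k : (0 < k)%nat -> Rabs (INR (N %/ k) - INR N / INR k) <= 1.
Proof. move=> k0. have [b1 b2] := floor_bounds N k k0. have hk := INR_posn k k0.
apply: Rabs_le; split.
- have : INR N / INR k <= INR (N %/ k) + 1.
    apply: (Rmult_le_reg_l (INR k)) => //.
    replace (INR k * (INR N / INR k)) with (INR N) by (field; lra). lra.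
  lra.
- have : INR (N %/ k) <= INR N / INR k.
    apply: (Rmult_le_reg_l (INR k)) => //.
    replace (INR k * (INR N / INR k)) with (INR N) by (field; lra). lra.
  have : 0 <= INR N / INR k by apply: Rmult_le_pos; [exact: pos_INR| apply: Rlt_le; apply: Rinv_0_lt_compat].
  lra.
Qed.

Lemma S_asym d W w E Z : HM W w E -> (forall k j, (0 < k)%nat -> inS d k -> W (k * j)%nat = W j) ->
  Un_cv (Zs d) Z -> forall N, (1 <= N)%nat ->
  Rabs (sumR (fun h => W h * Qprod d h) N - w * Z * INR N) <= (E + Rabs w) * Hn N + Rabs w.
Proof.
move=> hW hinv hZ N N1.
rewrite sum_WQ //.
have e : sumR (fun k => fS d 1 k * sumR W (N %/ k)) N =
   sumR (fun k => fS d 1 k * (sumR W (N %/ k) - w * INR (N %/ k))) N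
   + w * sumR (fun k => fS d 1 k * (INR (N %/ k) - INR N / INR k)) N + (w * INR N) * Zs d N.
  rewrite /Zs -!sumR_scal -!sumR_plus. apply: sumR_ext => k /andP[k1 _].
  rewrite fS2_eq. have := INR_posn k k1. move=> hk. field. lra.
rewrite e.
have E0 := HM_E0 _ _ _ hW.
have b1 : Rabs (sumR (fun k => fS d 1 k * (sumR W (N %/ k) - w * INR (N %/ k))) N) <= E * Hn N.
  apply: sum_bound => k /andP[k1 _]. rewrite Rabs_mult Rabs_pos_eq; last exact: fS_nonneg.
  have := fS_le d 1 k k1. rewrite pow_1 => hf.
  have := hW (N %/ k)%nat. have := fS_nonneg d 1 k. move=> h0 h1.
  apply: Rle_trans (_ : fS d 1 k * E <= _).
    apply: Rmult_le_compat_l => //.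
  rewrite Rmult_comm. apply: Rmult_le_compat_l => //.
have b2 : Rabs (sumR (fun k => fS d 1 k * (INR (N %/ k) - INR N / INR k)) N) <= 1 * Hn N.
  apply: sum_bound => k /andP[k1 _]. rewrite Rabs_mult Rabs_pos_eq; last exact: fS_nonneg.
  have := fS_le d 1 k k1. rewrite pow_1 => hf.
  have := floor_err N k k1. have := fS_nonneg d 1 k. move=> h0 h1.
  apply: Rle_trans (_ : fS d 1 k * 1 <= _).
    apply: Rmult_le_compat_l => //.
  lra.
have [z1 z2] := Z_bounds d Z N hZ N1.
have hN := INR_posn N N1.
have b3 : Rabs (w * INR N * Zs d N - w * Z * INR N) <= Rabs w.
  have -> : w * INR N * Zs d N - w * Z * INR N = w * (INR N * (Zs d N - Z)) by ring.
  rewrite Rabs_mult -{2}(Rmult_1_r (Rabs w)). apply: Rmult_le_compat_l; first exact: Rabs_pos.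
  rewrite Rabs_mult Rabs_pos_eq; last lra. rewrite Rabs_minus_sym Rabs_pos_eq; last lra.
  apply: (Rle_trans _ (INR N * / INR N)); first by apply: Rmult_le_compat_l; lra.
  rewrite Rinv_r; lra.
set s1 := sumR _ N in b1 *. set s2 := sumR _ N in b2 *.
have -> : s1 + w * s2 + w * INR N * Zs d N - w * Z * INR N = s1 + w * s2 + (w * INR N * Zs d N - w * Z * INR N) by ring.
have := Rabs_triang (s1 + w * s2) (w * INR N * Zs d N - w * Z * INR N).
have := Rabs_triang s1 (w * s2). rewrite Rabs_mult.
have : Rabs w * Rabs s2 <= Rabs w * (1 * Hn N) by apply: Rmult_le_compat_l => //; exact: Rabs_pos.
lra.
Qed.


Definition Ep d N := prodR (fun p => if prime p && inQ d p then / (1 - / INR p ^ 2) else 1) N.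

Lemma prime_dvd_fact_le p N : prime p -> (p %| N`!)%nat -> (p <= N)%nat.
Proof. move=> pp; elim: N => [|N IH].
- rewrite fact0 dvdn1 => /eqP e; move: pp; by rewrite e.
- rewrite factS Euclid_dvdM // => /orP[h|h].
  + exact: dvdn_leq h.
  + have := IH h; lia.
Qed.

Lemma prodR_primes2 (g : nat -> R) n N : (0 < n)%nat ->
  (forall p, prime p -> (p %| n)%nat -> (p <= N)%nat) ->
  prodR (fun p => if prime p && (p %| n)%nat then g p else 1) N = \big[Rmult/1]_(p <- primes n) g p.
Proof. move=> n0 hb.
have -> : primes n = [seq p <- index_iota 1 N.+1 | prime p && (p %| n)%nat].
  apply: (irr_sorted_eq (leT := ltn) ltn_trans ltnn).
  - exact: sorted_primes.
  - exact: filter_iota_sorted.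
  - move=> p; rewrite mem_filter mem_iota mem_primes n0 /=.
    case pp: (prime p) => //=. case pn: (p %| n)%nat => //=.
    have := hb p pp pn. have := prime_gt0 pp. lia.
by rewrite big_filter big_mkcond prodR_big.
Qed.

Lemma prodR_ext_range f g N : (forall i, (1 <= i <= N)%nat -> f i = g i) -> prodR f N = prodR g N.
Proof. elim: N => [|N IH] H //=. rewrite IH ?H //; first by rewrite leqnn.
move=> i /andP[h1 h2]; apply: H; rewrite h1 /=; exact: leqW. Qed.

Lemma prodR_nonneg f N : (forall i, (1 <= i <= N)%nat -> 0 <= f i) -> 0 <= prodR f N.
Proof. elim: N => [|N IH] H /=; first lra.
apply: Rmult_le_pos; last by apply: H; rewrite leqnn.
apply: IH => i /andP[h1 h2]; apply: H; rewrite h1 /=; exact: leqW. Qed.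

Lemma prodR_le f g N : (forall i, (1 <= i <= N)%nat -> 0 <= f i <= g i) -> prodR f N <= prodR g N.
Proof. elim: N => [|N IH] H /=; first lra.
have h1 : forall i, (1 <= i <= N)%nat -> 0 <= f i <= g i.
  move=> i /andP[a b]; apply: H; rewrite a /=; exact: leqW.
have := H N.+1 ltac:(by rewrite leqnn). move=> [a b].
apply: Rmult_le_compat => //.
- apply: prodR_nonneg => i hi; have := h1 i hi; lra.
- exact: IH.
Qed.

Lemma prodR_lower f g c N : 0 <= c -> (forall i, (1 <= i <= N)%nat -> 0 <= g i /\ c * g i <= f i) ->
  c ^ N * prodR g N <= prodR f N.
Proof. move=> c0; elim: N => [|N IH] H /=; first lra.
have h1 : forall i, (1 <= i <= N)%nat -> 0 <= g i /\ c * g i <= f i.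
  move=> i /andP[a b]; apply: H; rewrite a /=; exact: leqW.
have := H N.+1 ltac:(by rewrite leqnn). move=> [a b].
have gp : 0 <= prodR g N by apply: prodR_nonneg => i hi; case: (h1 i hi).
have cN : 0 <= c ^ N by apply: pow_le.
have := IH h1. move=> hh.
have -> : c * c ^ N * (prodR g N * g N.+1) = (c ^ N * prodR g N) * (c * g N.+1) by ring.
apply: Rmult_le_compat => //; apply: Rmult_le_pos => //.
Qed.

Lemma bernoulli (x : R) N : 0 <= x <= 1 -> 1 - INR N * x <= (1 - x) ^ N.
Proof. move=> hx; elim: N => [|N IH]; first (simpl; lra).
rewrite S_INR. change ((1 - x) ^ N.+1) with ((1 - x) * (1 - x) ^ N).
have := Rmult_le_compat_l (1 - x) _ _ ltac:(lra) IH. have := pos_INR N. nra. Qed.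

Lemma pow_decr x m n : 0 <= x <= 1 -> (m <= n)%nat -> x ^ n <= x ^ m.
Proof. move=> hx; elim: n => [|n IH] h.
- have -> : m = 0%nat by lia. lra.
- have [e|h'] : m = n.+1 \/ (m <= n)%nat by lia.
  + rewrite e; lra.
  + have := IH h'. have hxn : 0 <= x ^ n by apply: pow_le; lra.
    change (x ^ n.+1) with (x * x ^ n). nra.
Qed.

Lemma INR_le_pow2 J : INR J <= 2 ^ J.
Proof. elim: J => [|J IH]; first (simpl; lra). rewrite S_INR.
change (2 ^ J.+1) with (2 * 2 ^ J).
have : 1 <= 2 ^ J by apply: pow_R1_Rle; lra. lra. Qed.

Lemma factor_eq d p a : prime p ->
  \big[Rplus/0]_(0 <= j < a.+1) fS d 2 p ^ j =
  if inQ d p then (1 - (/ INR p ^ 2) ^ a.+1) / (1 - / INR p ^ 2) else 1.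
Proof. move=> pp. rewrite fS_prime //.
have hp : 2 <= INR p by have := le_INR 2 p (ltP (prime_gt1 pp)); simpl; lra.
case: (inQ d p).
- rewrite geom_sum //.
  have : / INR p ^ 2 < 1. rewrite -Rinv_1; apply: Rinv_lt_contravar; simpl; nra. lra.
- rewrite big_nat_recl //. rewrite pow_O.
  rewrite (eq_bigr (fun _ => 0)); last by move=> i _; rewrite /= Rmult_0_l.
  rewrite big1_eq /=. lra.
Qed.

Lemma x_bounds p : prime p -> 0 < / INR p ^ 2 <= / 4.
Proof. move=> pp. have hp : 2 <= INR p by have := le_INR 2 p (ltP (prime_gt1 pp)); simpl; lra.
split; first by apply: Rinv_0_lt_compat; apply: pow_lt; lra.
apply: Rinv_le_contravar; first lra. simpl; nra. Qed.

Lemma fact_ge N : (N <= N`!)%nat.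
Proof. case: N => [|N] //. apply: dvdn_leq; first exact: fact_gt0. apply: dvdn_fact; lia. Qed.

Lemma sumR_range_mono f N M : (N <= M)%nat -> (forall k, 0 <= f k) -> sumR f N <= sumR f M.
Proof. move=> NM hf; elim: M NM => [|M IH] NM.
- have -> : N = 0%nat by lia. lra.
- have [e|h] : N = M.+1 \/ (N <= M)%nat by lia.
  + rewrite e; lra.
  + have := IH h. have := hf M.+1. simpl. lra.
Qed.

Lemma Zs_le_Ep d N : (1 <= N)%nat -> Zs d N <= Ep d N.
Proof. move=> N1.
set L := N`!.
have L0 : (0 < L)%nat by exact: fact_gt0.
have e1 : Zs d N = sumR (fun k => if (k %| L)%nat then fS d 2 k else 0) N.
  apply: sumR_ext => k /andP[k1 kN]. by rewrite dvdn_fact ?k1.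
have e2 : sumR (fun k => if (k %| L)%nat then fS d 2 k else 0) N <=
          sumR (fun k => if (k %| L)%nat then fS d 2 k else 0) L.
  apply: sumR_range_mono; first exact: fact_ge.
  move=> k; case: ifP => _; [exact: fS_nonneg| lra].
rewrite e1; apply: Rle_trans e2 _.
rewrite -div_sum // (mult_expand _ (fS_1 d 2) (fS_M d 2)) //.
rewrite -(prodR_primes2 _ L N) //; last by move=> p pp; exact: prime_dvd_fact_le.
apply: prodR_le => i /andP[i1 iN].
case pi: (prime i) => /=; last lra.
rewrite dvdn_fact ?i1 //= factor_eq //.
have [x0 x1] := x_bounds i pi.
case: (inQ d i); last lra.
set x := / INR i ^ 2 in x0 x1 *.
have hxa : 0 <= x ^ (logn i L).+1 <= 1.
  split; first by apply: pow_le; lra.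
  have := pow_decr x 0 (logn i L).+1 ltac:(lra) isT. simpl. lra.
split.
- apply: Rmult_le_pos; [lra| apply: Rlt_le; apply: Rinv_0_lt_compat; lra].
- rewrite /Rdiv. rewrite -{2}(Rmult_1_l (/ (1 - x))). apply: Rmult_le_compat_r; last lra.
  apply: Rlt_le; apply: Rinv_0_lt_compat; lra.
Qed.

Lemma Ep_nonneg d N : 0 <= Ep d N.
Proof. apply: prodR_nonneg => i _. case: ifP => /andP; last lra.
move=> [pi _]. have [x0 x1] := x_bounds i pi. apply: Rlt_le; apply: Rinv_0_lt_compat; lra. Qed.

Lemma Ep_le_Z d Z N : Un_cv (Zs d) Z -> (1 <= N)%nat -> Ep d N <= Z.
Proof. move=> hZ N1.
have key : forall J, (1 <= J)%nat -> (1 - INR N * (/ 2) ^ J) * Ep d N <= Z.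
  move=> J J1.
  set L := (N`! ^ J)%nat.
  have L0 : (0 < L)%nat by rewrite /L expn_gt0 fact_gt0.
  have hLp : forall p, prime p -> (p %| L)%nat = (p %| N`!)%nat.
    move=> p pp; rewrite /L Euclid_dvdX // J1 andbT //.
  have s1 : \big[Rplus/0]_(k <- divisors L) fS d 2 k <= Z.
    rewrite (div_sum _ L L) //. apply: Rle_trans (growing_ineq _ _ (Zs_growing d) hZ L).
    apply: sumR_le => k _. case: ifP => _; [lra| exact: fS_nonneg].
  rewrite (mult_expand _ (fS_1 d 2) (fS_M d 2)) // in s1.
  rewrite -(prodR_primes2 _ L N) // in s1; last first.
    move=> p pp; rewrite hLp //; exact: prime_dvd_fact_le.
  set δ := (/ 2) ^ J.
  have d0 : 0 <= δ <= / 2.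
    split; first by apply: pow_le; lra.
    have := pow_decr (/2) 1 J ltac:(lra) J1. rewrite /δ. simpl. lra.
  have low := prodR_lower _ (fun p => if prime p && inQ d p then / (1 - / INR p ^ 2) else 1) (1 - δ) N ltac:(lra).
  have := bernoulli δ N ltac:(lra).
  have := Ep_nonneg d N. rewrite /Ep. move=> hE hb.
  apply: Rle_trans s1.
  apply: Rle_trans (_ : (1 - δ) ^ N * prodR (fun p => if prime p && inQ d p then / (1 - / INR p ^ 2) else 1) N <= _).
    apply: Rmult_le_compat_r => //.
  apply: low => i /andP[i1 iN].
  case pi: (prime i) => /=; last (split; lra).
  have [x0 x1] := x_bounds i pi.
  rewrite hLp // dvdn_fact ?i1 //= factor_eq //.
  case: (inQ d i); last (split; lra).
  set x := / INR i ^ 2 in x0 x1 *.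
  have ix : 0 < / (1 - x) by apply: Rinv_0_lt_compat; lra.
  split; first lra.
  have la : (J <= logn i L)%nat.
    rewrite /L lognX. have : (0 < logn i N`!)%nat by rewrite logn_gt0 mem_primes pi fact_gt0 dvdn_fact ?i1.
    nia.
  have hx : x ^ (logn i L).+1 <= δ.
    apply: Rle_trans (pow_decr x J (logn i L).+1 ltac:(lra) ltac:(lia)) _.
    apply: pow_incr; lra.
  rewrite /Rdiv. apply: Rmult_le_compat_r; lra.
apply: Rle_plus_epsilon => eps eps0.
have [n hn] := INR_archimed eps (INR N * Ep d N) eps0.
have := key n.+1 isT.
have hJ : (/ 2) ^ n.+1 <= / INR n.+1.
  rewrite pow_inv. apply: Rinv_le_contravar; first exact: INR_posn. exact: INR_le_pow2.
have hE := Ep_nonneg d N. have hNn := pos_INR N. have hn1 := INR_posn n.+1 isT.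
have : INR N * Ep d N * (/ 2) ^ n.+1 <= INR N * Ep d N * / INR n.+1.
  apply: Rmult_le_compat_l => //; nra.
have : INR N * Ep d N * / INR n.+1 < eps.
  apply: (Rmult_lt_reg_l (INR n.+1)) => //.
  replace (INR n.+1 * (INR N * Ep d N * / INR n.+1)) with (INR N * Ep d N) by (field; lra).
  rewrite S_INR in hn1 *. have := pos_INR n. nra.
nra.
Qed.

Lemma Ep_cv d Z : Un_cv (Zs d) Z -> Un_cv (Ep d) Z.
Proof. move=> hZ eps eps0. have [N hN] := hZ eps eps0.
exists (maxn N 1). move=> n hn. have n1 : (1 <= n)%nat by move/leP: hn; lia.
have := hN n ltac:(move/leP: hn => hn; apply/leP; lia).
have := Zs_le_Ep d n n1. have := Ep_le_Z d Z n hZ n1.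
rewrite /R_dist => h1 h2 h3.
have h4 := Rle_abs (Zs d n - Z). have h5 := Rabs_minus_sym (Zs d n) Z.
have h6 := Rle_abs (Z - Zs d n).
rewrite Rabs_left1; lra.
Qed.


Lemma weighted_rewrite (t : nat -> R) n :
  sumR (fun h => INR (n.+1 - h) * t h) n = sumR (fun N => sumR t N) n.
Proof. elim: n => [|n IH] //.
have -> : sumR (fun h => INR (n.+2 - h) * t h) n.+1 =
   sumR (fun h => INR (n.+1 - h) * t h) n + sumR t n.+1.
  change (sumR (fun h => INR (n.+2 - h) * t h) n.+1) with
    (sumR (fun h => INR (n.+2 - h) * t h) n + INR (n.+2 - n.+1) * t n.+1).
  change (sumR t n.+1) with (sumR t n + t n.+1).
  rewrite (sumR_ext _ (fun h => INR (n.+1 - h) * t h + t h)); last first.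
    move=> i /andP[_ h2]. have -> : (n.+2 - i = (n.+1 - i).+1)%nat by lia. rewrite S_INR; ring.
  rewrite sumR_plus. have -> : (n.+2 - n.+1 = 1)%nat by lia. simpl INR. ring.
rewrite IH. done.
Qed.

Lemma sumR_minus f g N : sumR f N - sumR g N = sumR (fun i => f i - g i) N.
Proof. elim: N => [|N IH] /=; [lra| rewrite -IH; lra]. Qed.

Lemma sum_id n : sumR (fun N => INR N) n = INR n * (INR n + 1) / 2.
Proof. elim: n => [|n IH]; first (simpl; lra).
change (sumR (fun N => INR N) n.+1) with (sumR (fun N => INR N) n + INR n.+1).
rewrite IH S_INR. field. Qed.

Lemma Hn_mono N M : (N <= M)%nat -> Hn N <= Hn M.
Proof. move=> h; apply: sumR_range_mono => // k. case: k => [|k]; first (simpl; rewrite Rinv_0; lra).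
apply: Rlt_le; apply: Rinv_0_lt_compat; exact: INR_posn. Qed.

Lemma ln_le_pow H eps : 1 <= H -> 0 < eps -> ln H <= Rpower H eps / eps.
Proof. move=> H1 e0. rewrite /Rpower.
have := exp_ineq1_le (eps * ln H). move=> h.
apply: (Rmult_le_reg_l eps) => //. replace (eps * (exp (eps * ln H) / eps)) with (exp (eps * ln H)) by (field; lra).
lra. Qed.

Lemma Rpower_ge1 H eps : 1 <= H -> 0 < eps -> 1 <= Rpower H eps.
Proof. move=> H1 e0. rewrite /Rpower.
have := exp_ineq1_le (eps * ln H). have : 0 <= ln H.
  rewrite -ln_1. apply: ln_le'; lra.
nra. Qed.

Lemma final_bound d w E Z : HM (Wprod d) w E -> Un_cv (Zs d) Z ->
  forall eps, 0 < eps -> exists C : R, forall H : nat, (1 <= H)%nat ->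
   Rabs (pair_sum d H - c_const d * w * Z * INR H ^ 2) <= C * Rpower (INR H) (1 + eps).
Proof.
move=> hW hZ eps e0.
set c := c_const d.
have E0 := HM_E0 _ _ _ hW.
set A := Rabs (c * w * Z) + 2 * Rabs c * (E + Rabs w) + 2 * Rabs c * Rabs w.
set B := 2 * Rabs c * (E + Rabs w).
have A0 : 0 <= A by rewrite /A; have := Rabs_pos (c * w * Z); have := Rabs_pos c; have := Rabs_pos w; nra.
have B0 : 0 <= B by rewrite /B; have := Rabs_pos c; have := Rabs_pos w; nra.
exists (A + B / eps) => H H1.
have hH : 1 <= INR H by have := le_INR 1 H (leP H1); simpl; lra.
rewrite pair_weighted /weighted_sum.
case: H H1 hH => [|n] // _ hH.
rewrite subn1 /= -/(INR n.+1).
rewrite weighted_rewrite.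
set T := Tsing d.
have hS : forall N, (1 <= N)%nat -> Rabs (sumR T N - c * w * Z * INR N) <= Rabs c * ((E + Rabs w) * Hn N + Rabs w).
  move=> N N1. rewrite /T (sumR_ext _ (fun h => c * (Wprod d h * Qprod d h))); last first.
    by move=> i _; rewrite /Tsing -/c Rmult_assoc.
  rewrite sumR_scal.
  have -> : c * sumR (fun h => Wprod d h * Qprod d h) N - c * w * Z * INR N =
     c * (sumR (fun h => Wprod d h * Qprod d h) N - w * Z * INR N) by ring.
  rewrite Rabs_mult. apply: Rmult_le_compat_l; first exact: Rabs_pos.
  apply: S_asym => //. exact: Wprod_inv.
have hsum : Rabs (sumR (fun N => sumR T N) n - c * w * Z * sumR (fun N => INR N) n)
   <= INR n * (Rabs c * ((E + Rabs w) * Hn n.+1 + Rabs w)).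
  rewrite -sumR_scal.
  have -> : sumR (fun N => sumR T N) n - sumR (fun i => c * w * Z * INR i) n =
            sumR (fun N => sumR T N - c * w * Z * INR N) n.
    by rewrite sumR_minus.
  apply: Rle_trans; first exact: sumR_abs.
  apply: Rle_trans (_ : _ <= sumR (fun _ => Rabs c * ((E + Rabs w) * Hn n.+1 + Rabs w)) n) _; last first.
    rewrite sumR_const; lra.
  apply: sumR_le => N /andP[N1 Nn].
  apply: Rle_trans; first exact: hS.
  apply: Rmult_le_compat_l; first exact: Rabs_pos.
  have := Hn_mono N n.+1 ltac:(lia). have := Rabs_pos w. nra.
rewrite sum_id in hsum.
have hln := Hn_ln n.+1 isT.
set x := INR n.+1 in hH hln *.
have xn : INR n = x - 1 by rewrite /x S_INR; ring.
rewrite xn in hsum.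
have lnp := ln_le_pow x eps hH e0.
have rp := Rpower_ge1 x eps hH e0.
have -> : Rpower x (1 + eps) = x * Rpower x eps by rewrite Rpower_plus Rpower_1; lra.
set S := sumR (fun N => sumR T N) n in hsum *.
set R1 := Rpower x eps in lnp rp *.
set L := ln x in hln lnp *.
have hsum' : Rabs (2 * S - c * w * Z * x ^ 2) <= Rabs (c * w * Z) * x + 2 * (x - 1) * (Rabs c * ((E + Rabs w) * (1 + L) + Rabs w)).
  have -> : 2 * S - c * w * Z * x ^ 2 = 2 * (S - c * w * Z * ((x - 1) * (x - 1 + 1) / 2)) - c * w * Z * x by field.
  apply: Rle_trans; first exact: Rabs_triang.
  rewrite Rabs_Ropp Rabs_mult (Rabs_mult (c * w * Z) x) (Rabs_pos_eq 2) ?(Rabs_pos_eq x); try lra.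
  have : Rabs c * ((E + Rabs w) * Hn n.+1 + Rabs w) <= Rabs c * ((E + Rabs w) * (1 + L) + Rabs w).
    apply: Rmult_le_compat_l; first exact: Rabs_pos. have := Rabs_pos w. nra.
  have := pos_INR n. rewrite xn. nra.
apply: Rle_trans hsum' _.
have hL : 0 <= L by rewrite /L -ln_1; apply: ln_le'; lra.
have hc := Rabs_pos c. have hw := Rabs_pos w. have hcw := Rabs_pos (c * w * Z).
have : L <= R1 / eps by [].
move=> lnp'.
have hBe : B * L <= B * (R1 / eps) by apply: Rmult_le_compat_l.
have : (A + B / eps) * (x * R1) >= x * (A + B * L).
  have : A + B * L <= (A + B / eps) * R1.
    have : A <= A * R1 by nra.
    have : B * (R1 / eps) = B / eps * R1 by field; lra.
    lra.
  nra.
move=> hfin.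
have k1 : 0 <= Rabs c * ((E + Rabs w) * (1 + L)) by apply: Rmult_le_pos => //; nra.
have k2 : 0 <= Rabs c * Rabs w by nra.
have : Rabs (c * w * Z) * x + 2 * (x - 1) * (Rabs c * ((E + Rabs w) * (1 + L) + Rabs w)) <= x * (A + B * L).
  rewrite /A /B.
  have -> : Rabs (c * w * Z) * x + 2 * (x - 1) * (Rabs c * ((E + Rabs w) * (1 + L) + Rabs w)) =
     x * (Rabs (c * w * Z) + 2 * Rabs c * (E + Rabs w) + 2 * Rabs c * Rabs w + 2 * Rabs c * (E + Rabs w) * L)
     - 2 * (Rabs c * ((E + Rabs w) * (1 + L)) + Rabs c * Rabs w) by ring.
  lra.
lra.
Qed.


Lemma g2_Ep d N : inQ d 2 = false -> g2_partial d N = Ep d N.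
Proof. move=> h2. apply: prodR_ext => i.
case pi: (prime i) => //=. case: (even_prime pi) => [->|->] //. by rewrite h2. Qed.

Lemma prodR_point f g N p : (1 <= p <= N)%nat -> (forall i, i <> p -> f i = g i) ->
  prodR f N * g p = prodR g N * f p.
Proof. move=> hp hfg. elim: N hp => [|N IH] hp; first lia.
have [e|h] : p = N.+1 \/ (1 <= p <= N)%nat by lia.
- rewrite /= e. have -> : prodR f N = prodR g N.
    apply: prodR_ext_range => i hi; apply: hfg; lia.
  ring.
- rewrite /= hfg; last lia. have := IH h. move=> e. 
  have -> : prodR f N * g N.+1 * g p = (prodR f N * g p) * g N.+1 by ring.
  rewrite e; ring.
Qed.

Lemma g2_Ep3 N : (2 <= N)%nat -> g2_partial 3 N = 3 / 4 * Ep 3 N.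
Proof. move=> N2.
have := prodR_point (fun p => if prime p && inQ 3 p then / (1 - / INR p ^ 2) else 1)
   (fun p => if [&& prime p, odd p & inQ 3 p] then / (1 - / INR p ^ 2) else 1) N 2 ltac:(lia).
rewrite -/(Ep 3 N) -/(g2_partial 3 N).
have -> : (if prime 2 && inQ 3 2 then / (1 - / INR 2 ^ 2) else 1) = 4 / 3.
  have -> : prime 2 && inQ 3 2 = true by []. simpl INR. field.
have -> : (if [&& prime 2, odd 2 & inQ 3 2] then / (1 - / INR 2 ^ 2) else 1) = 1 by [].
move=> h. rewrite Rmult_1_r in h. rewrite h; last first.
  move=> i ni. case pi: (prime i) => //=. case: (even_prime pi) => // -> //.
field.
Qed.

Lemma cv_scal (u : nat -> R) l k : Un_cv u l -> Un_cv (fun n => k * u n) (k * l).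
Proof. move=> hu eps e0.
have hk : 0 < Rabs k + 1 by have := Rabs_pos k; lra.
have [N hN] := hu (eps / (Rabs k + 1)) ltac:(apply: Rdiv_lt_0_compat; lra).
exists N => n hn. rewrite /R_dist.
have -> : k * u n - k * l = k * (u n - l) by ring.
rewrite Rabs_mult. have := hN n hn. rewrite /R_dist => h.
have : Rabs k * Rabs (u n - l) <= Rabs k * (eps / (Rabs k + 1)).
  apply: Rmult_le_compat_l; [exact: Rabs_pos| lra].
have : Rabs k * (eps / (Rabs k + 1)) < eps.
  apply: (Rmult_lt_reg_l (Rabs k + 1)) => //.
  replace ((Rabs k + 1) * (Rabs k * (eps / (Rabs k + 1)))) with (Rabs k * eps) by (field; lra).
  lra.
lra. Qed.

Lemma cv_shift (u v : nat -> R) l N0 : (forall n, (N0 <= n)%nat -> u n = v n) -> Un_cv v l -> Un_cv u l.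
Proof. move=> e hv eps e0. have [N hN] := hv eps e0. exists (maxn N N0) => n hn.
rewrite e; last by move/leP: hn; lia. apply: hN. move/leP: hn => hn; apply/leP; lia. Qed.

Lemma beta_sq d G : 0 <= G -> 0 <= 2 * INR d * L1 d / (PI * INR (totient (2 * d))) ->
  beta d G ^ 2 = delta_const d ^ 2 * G * (2 * INR d * L1 d / (PI * INR (totient (2 * d)))).
Proof. move=> G0 X0. rewrite /beta !Rpow_mult_distr !pow2_sqrt //. Qed.

Lemma Z_pos d Z : Un_cv (Zs d) Z -> 1 <= Z.
Proof. move=> hZ. have := growing_ineq _ _ (Zs_growing d) hZ 1. rewrite /Zs /= fS_1. lra. Qed.


Lemma finish d w E Z G : HM (Wprod d) w E -> Un_cv (Zs d) Z -> Un_cv (g2_partial d) G ->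
  beta d G ^ 2 = c_const d * w * Z ->
  (forall H : nat, pair_sum d H = weighted_sum d H) /\
  exists G : R, Un_cv (g2_partial d) G /\
    forall eps : R, 0 < eps ->
      exists (C : R) (H0 : nat), forall H : nat, (1 <= H)%nat -> (H0 <= H)%nat ->
        Rabs (pair_sum d H - (beta d G) ^ 2 * (INR H) ^ 2)
          <= C * Rpower (INR H) (1 + eps).
Proof. move=> hW hZ hG hb. split; first exact: pair_weighted.
exists G; split => // eps e0. have [C hC] := final_bound d w E Z hW hZ eps e0.
exists C, 0%nat => H H1 _. rewrite hb. exact: hC. Qed.

Lemma PIpos : 0 < PI. Proof. exact: PI_RGT_0. Qed.

Theorem theorem6p2 (d : nat)
  (hd : d = 1%nat \/ d = 2%nat \/ d = 3%nat \/ d = 4%nat \/ d = 7%nat) :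
  (forall H : nat, pair_sum d H = weighted_sum d H) /\
  exists G : R, Un_cv (g2_partial d) G /\
    forall eps : R, 0 < eps ->
      exists (C : R) (H0 : nat), forall H : nat, (1 <= H)%nat -> (H0 <= H)%nat ->
        Rabs (pair_sum d H - (beta d G) ^ 2 * (INR H) ^ 2)
          <= C * Rpower (INR H) (1 + eps).
Proof.
have pi0 := PIpos.
case: hd => [->|[->|[->|[->|->]]]].
- have [E hE] := HM_W1. have [Z hZ] := growing_cv _ (Zs_growing 1) (Zs_ub 1).
  have Z1 := Z_pos _ _ hZ.
  apply: (finish 1 (/4) E Z Z hE hZ).
    apply: (cv_shift (g2_partial 1) (Ep 1) Z 0 (fun n _ => g2_Ep 1 n erefl)); exact: Ep_cv.
  rewrite beta_sq; [|lra|]; have -> : totient (2 * 1) = 1%nat by [];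
    rewrite /delta_const /L1 /c_const; simpl INR; [field; lra| apply: Rmult_le_pos; [lra| apply: Rlt_le; apply: Rinv_0_lt_compat; lra]].
- have [E hE] := HM_W2. have [Z hZ] := growing_cv _ (Zs_growing 2) (Zs_ub 2).
  have Z1 := Z_pos _ _ hZ.
  apply: (finish 2 (/4) E Z Z hE hZ).
    apply: (cv_shift (g2_partial 2) (Ep 2) Z 0 (fun n _ => g2_Ep 2 n erefl)); exact: Ep_cv.
  have s2 : sqrt 2 * sqrt 2 = 2 by apply: sqrt_sqrt; lra.
  have s0 : 0 < sqrt 2 by apply: sqrt_lt_R0; lra.
  rewrite beta_sq; [|lra|]; have -> : totient (2 * 2) = 2%nat by [];
    rewrite /delta_const /L1 /c_const; simpl INR.
  + field_simplify_eq; try lra; try (rewrite pow2_sqrt; [ring|lra]).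
  + apply: Rmult_le_pos; first (apply: Rmult_le_pos; [lra| apply: Rmult_le_pos; [lra| apply: Rlt_le; apply: Rinv_0_lt_compat; lra]]).
    apply: Rlt_le; apply: Rinv_0_lt_compat; lra.
- have [E hE] := HM_W3. have [Z hZ] := growing_cv _ (Zs_growing 3) (Zs_ub 3).
  have Z1 := Z_pos _ _ hZ.
  apply: (finish 3 (/4) E Z (3 / 4 * Z) hE hZ).
    apply: (cv_shift (g2_partial 3) (fun n => 3 / 4 * Ep 3 n) _ 2 (fun n hn => g2_Ep3 n hn)). apply: cv_scal; exact: Ep_cv.
  have s2 : sqrt 3 * sqrt 3 = 3 by apply: sqrt_sqrt; lra.
  have s0 : 0 < sqrt 3 by apply: sqrt_lt_R0; lra.
  rewrite beta_sq; [|lra|]; have -> : totient (2 * 3) = 2%nat by [];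
    rewrite /delta_const /L1 /c_const; simpl INR.
  + field_simplify_eq; try lra; try (rewrite pow2_sqrt; [ring|lra]).
  + apply: Rmult_le_pos; first (apply: Rmult_le_pos; [lra| apply: Rmult_le_pos; [lra| apply: Rlt_le; apply: Rinv_0_lt_compat; lra]]).
    apply: Rlt_le; apply: Rinv_0_lt_compat; lra.
- have [E hE] := HM_W4. have [Z hZ] := growing_cv _ (Zs_growing 4) (Zs_ub 4).
  have Z1 := Z_pos _ _ hZ.
  apply: (finish 4 (9/64) E Z Z hE hZ).
    apply: (cv_shift (g2_partial 4) (Ep 4) Z 0 (fun n _ => g2_Ep 4 n erefl)); exact: Ep_cv.
  rewrite beta_sq; [|lra|]; have -> : totient (2 * 4) = 4%nat by [];
    rewrite /delta_const /L1 /c_const; simpl INR; [field; lra| apply: Rmult_le_pos; [lra| apply: Rlt_le; apply: Rinv_0_lt_compat; lra]].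
- have [E hE] := HM_W7. have [Z hZ] := growing_cv _ (Zs_growing 7) (Zs_ub 7).
  have Z1 := Z_pos _ _ hZ.
  apply: (finish 7 (9/64) E Z Z hE hZ).
    apply: (cv_shift (g2_partial 7) (Ep 7) Z 0 (fun n _ => g2_Ep 7 n erefl)); exact: Ep_cv.
  have s2 : sqrt 7 * sqrt 7 = 7 by apply: sqrt_sqrt; lra.
  have s0 : 0 < sqrt 7 by apply: sqrt_lt_R0; lra.
  rewrite beta_sq; [|lra|]; have -> : totient (2 * 7) = 6%nat by [];
    rewrite /delta_const /L1 /c_const; simpl INR.
  + field_simplify_eq; try lra; try (rewrite pow2_sqrt; [ring|lra]).
  + apply: Rmult_le_pos; first (apply: Rmult_le_pos; [lra| apply: Rmult_le_pos; [lra| apply: Rlt_le; apply: Rinv_0_lt_compat; lra]]).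
    apply: Rlt_le; apply: Rinv_0_lt_compat; lra.
Qed.
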